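(* Consider a pullback square in $\mathsf{PreOrdGrp}$ $(p_2,\bar p_2)\colon(P,P_P)\to(G,P_G)$, $(p_1,\bar p_1)\colon(P,P_P)\to(E,P_E)$, $(f,\bar f)\colon(G,P_G)\to(H,P_H)$, $(p,\bar p)\colon(E,P_E)\to(H,P_H)$, with $(f,\bar f)\circ(p_2,\bar p_2)=(p,\bar p)\circ(p_1,\bar p_1)$, in which all four arrows are regular epimorphisms. Then: (1) if Condition $(\star)$ holds for $(f,\bar f)$, then it holds for $(p_1,\bar p_1)$; (2) if $(p,\bar p)=(f,\bar f)$ (so that the square is the kernel pair of $(f,\bar f)$), then Condition $(\star)$ holds for $(p_1,\bar p_1)$ if and only if it holds for $(f,\bar f)$.
   Context: A preordered group is a pair $(G,P_G)$ with $G$ an additively written group and $P_G\subseteq G$ a submonoid closed under conjugation; morphisms are group homomorphisms $f$ with $f(P_G)\subseteq P_H$, $\bar f$ denoting the restriction to positive cones. This is $\mathsf{PreOrdGrp}$. Pullbacks are computed componentwise: $P=E\times_H G$ and $P_P=P_E\times_{P_H}P_G$. Regular epimorphisms are the morphisms with $f$ and $\bar f$ surjective. For a group $G$, $\eta_G\colon G\to G/[G,G]$ is the abelianization quotient. A morphism $(f,\bar f)\colon(G,P_G)\to(H,P_H)$ satisfies Condition $(\star)$ if for all $a,b,c\in P_G$ with $\eta_G(a)=\eta_G(b)$ and $f(b)=f(c)$, one has $a-b+c\in P_G$. *)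

(* Defs.v *)
Set Implicit Arguments.

Record preOrdGrp := PreOrdGrp {
  carrier :> Type;
  add : carrier -> carrier -> carrier;
  zero : carrier;
  opp : carrier -> carrier;
  addA : forall x y z, add x (add y z) = add (add x y) z;
  add0g : forall x, add zero x = x;
  addg0 : forall x, add x zero = x;
  addNg : forall x, add (opp x) x = zero;
  addgN : forall x, add x (opp x) = zero;
  pos : carrier -> Prop;
  pos0 : pos zero;
  posD : forall x y, pos x -> pos y -> pos (add x y);
  posJ : forall g x, pos x -> pos (add (add g x) (opp g))
}.

Arguments add {p}.
Arguments zero {p}.
Arguments opp {p}.
Arguments pos {p}.

Definition sub {G : preOrdGrp} (x y : G) : G := add x (opp y).

Record hom (G H : preOrdGrp) := Hom {
  hfun :> G -> H;
  hom_add : forall x y, hfun (add x y) = add (hfun x) (hfun y);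
  hom_pos : forall x, pos x -> pos (hfun x)
}.

Definition regular_epi {G H : preOrdGrp} (f : hom G H) : Prop :=
  (forall y : H, exists x : G, f x = y) /\
  (forall y : H, pos y -> exists x : G, pos x /\ f x = y).

Definition commg {G : preOrdGrp} (a b : G) : G :=
  add (add (add (opp a) (opp b)) a) b.

Inductive in_derived (G : preOrdGrp) : G -> Prop :=
  | der_comm : forall a b, in_derived G (commg a b)
  | der_zero : in_derived G zero
  | der_add : forall x y, in_derived G x -> in_derived G y -> in_derived G (add x y)
  | der_opp : forall x, in_derived G x -> in_derived G (opp x).

(** eta_G a = eta_G b for the abelianization quotient eta_G : G -> G/[G,G],
    i.e. a and b lie in the same coset of [G,G]. *)
Definition eta_eq {G : preOrdGrp} (a b : G) : Prop := in_derived G (sub a b).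

Definition cond_star {G H : preOrdGrp} (f : hom G H) : Prop :=
  forall a b c : G, pos a -> pos b -> pos c ->
    eta_eq a b -> f b = f c -> pos (add (sub a b) c).

(** The commutative square f o p2 = p o p1 is a pullback in PreOrdGrp, i.e.
    the induced map P -> E x_H G is an isomorphism of preordered groups,
    where the pullback is computed componentwise (underlying groups and
    positive cones). *)
Definition is_pullback {P E G H : preOrdGrp}
  (p1 : hom P E) (p2 : hom P G) (p : hom E H) (f : hom G H) : Prop :=
  (forall x : P, f (p2 x) = p (p1 x)) /\
  (forall x y : P, p1 x = p1 y -> p2 x = p2 y -> x = y) /\
  (forall (e : E) (g : G), p e = f g -> exists x : P, p1 x = e /\ p2 x = g) /\
  (forall x : P, pos (p1 x) -> pos (p2 x) -> pos x).

(* Main.v *)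
Require Import Defs.

Section L.
Variable G : preOrdGrp.

Lemma lcancel (x y z : G) : add x y = add x z -> y = z.
Proof.
  intro h. rewrite <- (add0g G y), <- (add0g G z), <- (addNg G x), <- !addA, h. reflexivity.
Qed.

Lemma inv_uniq (x y : G) : add y x = zero -> y = opp x.
Proof.
  intro h. rewrite <- (addg0 G y), <- (addgN G x), addA, h, add0g. reflexivity.
Qed.
End L.

Lemma hom0 (G H : preOrdGrp) (f : hom G H) : f zero = zero.
Proof.
  apply (@lcancel H (f zero)). rewrite <- hom_add, add0g, addg0. reflexivity.
Qed.

Lemma homN (G H : preOrdGrp) (f : hom G H) x : f (opp x) = opp (f x).
Proof.
  apply inv_uniq. rewrite <- hom_add, addNg. apply hom0.
Qed.

Lemma homB (G H : preOrdGrp) (f : hom G H) x y : f (sub x y) = sub (f x) (f y).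
Proof. unfold sub. rewrite hom_add, homN. reflexivity. Qed.

Lemma homC (G H : preOrdGrp) (f : hom G H) x y : f (commg x y) = commg (f x) (f y).
Proof. unfold commg. rewrite !hom_add, !homN. reflexivity. Qed.

Lemma hom_der (G H : preOrdGrp) (f : hom G H) x : in_derived G x -> in_derived H (f x).
Proof.
  induction 1.
  - rewrite homC. constructor.
  - rewrite hom0. constructor.
  - rewrite hom_add. constructor; assumption.
  - rewrite homN. constructor; assumption.
Qed.

Lemma hom_eta (G H : preOrdGrp) (f : hom G H) a b : eta_eq a b -> eta_eq (f a) (f b).
Proof. unfold eta_eq. intro h. rewrite <- homB. apply hom_der. exact h. Qed.

Lemma part1 {P E G H : preOrdGrp} {p1 : hom P E} {p2 : hom P G}
          {p : hom E H} {f : hom G H} :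
      is_pullback p1 p2 p f -> cond_star f -> cond_star p1.
Proof.
  intros [comm [inj [ex ps]]] sf a b c pa pb pc eab e.
  apply ps.
  - rewrite !hom_add, homB, e. unfold sub.
    rewrite <- addA, addNg, addg0. apply hom_pos; exact pa.
  - rewrite hom_add, homB. apply sf; try (apply hom_pos; assumption).
    + apply hom_eta; exact eab.
    + rewrite !comm, e. reflexivity.
Qed.

Lemma diag_der {P G H : preOrdGrp} {p1 : hom P G} {p2 : hom P G} {f : hom G H} :
  is_pullback p1 p2 f f -> forall w, in_derived G w ->
  exists u, in_derived P u /\ p1 u = w /\ p2 u = w.
Proof.
  intros [comm [inj [ex ps]]] w.
  induction 1.
  - destruct (ex a a eq_refl) as [xa [h1 h2]].
    destruct (ex b b eq_refl) as [xb [h3 h4]].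
    exists (commg xa xb). split; [constructor|].
    rewrite !homC, h1, h2, h3, h4. split; reflexivity.
  - exists zero. split; [constructor|]. rewrite !hom0. split; reflexivity.
  - destruct IHin_derived1 as [u1 [d1 [e1 e2]]].
    destruct IHin_derived2 as [u2 [d2 [e3 e4]]].
    exists (add u1 u2). split; [constructor; assumption|].
    rewrite !hom_add, e1, e2, e3, e4. split; reflexivity.
  - destruct IHin_derived as [u1 [d1 [e1 e2]]].
    exists (opp u1). split; [constructor; assumption|].
    rewrite !homN, e1, e2. split; reflexivity.
Qed.

Theorem lemma2p7 :
  (forall (P E G H : preOrdGrp) (p1 : hom P E) (p2 : hom P G)
          (p : hom E H) (f : hom G H),
      is_pullback p1 p2 p f ->
      regular_epi p1 -> regular_epi p2 -> regular_epi p -> regular_epi f ->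
      cond_star f -> cond_star p1) /\
  (forall (P G H : preOrdGrp) (p1 : hom P G) (p2 : hom P G) (f : hom G H),
      is_pullback p1 p2 f f ->
      regular_epi p1 -> regular_epi p2 -> regular_epi f ->
      (cond_star p1 <-> cond_star f)).
Proof.
  split.
  - intros P E G H p1 p2 p f pb _ _ _ _. exact (part1 pb).
  - intros P G H p1 p2 f pb _ _ _. split; [|exact (part1 pb)].
    intros s1 a b c pa pb' pc eab e.
    pose proof pb as [comm [inj [ex ps]]].
    destruct (ex a a eq_refl) as [x [hx1 hx2]].
    destruct (ex b b eq_refl) as [y [hy1 hy2]].
    destruct (ex b c e) as [z [hz1 hz2]].
    destruct (diag_der pb _ eab) as [u [du [hu1 hu2]]].
    assert (Hxy : sub x y = u).
    { apply inj; rewrite homB; congruence. }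
    assert (Hp : pos (add (sub x y) z)).
    { apply s1.
      - apply ps; rewrite ?hx1, ?hx2; assumption.
      - apply ps; rewrite ?hy1, ?hy2; assumption.
      - apply ps; rewrite ?hz1, ?hz2; assumption.
      - unfold eta_eq. rewrite Hxy. exact du.
      - congruence. }
    apply (hom_pos p2) in Hp.
    rewrite hom_add, homB, hx2, hy2, hz2 in Hp. exact Hp.
Qed.
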